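(* Let $\epsilon\in(0,1]$ and $p \in (0,1)$ be constants and let $\xi>0$ be an arbitrary constant. Consider $\mathrm{USD}_p$ started from a configuration $\mathbf{x}(0)=(x_1(0),x_2(0),u(0))$ with $x_1(0)\in[\epsilon n, x_2(0)]$, $u(0)\le n/2$, and $|\Delta_w(0)| < \xi\sqrt{n\log n}$. Let $T_w := \inf\{t \geq 0 : |\Delta_w(t)| \geq \xi\sqrt{n\log n}\}$. Then with high probability $T_w = O(n\log^2 n)$.
   Context: Population protocol with $n$ agents, each in a state from $\{1,2,\bot\}$ (Opinion 1, Opinion 2, undecided). At each time step a scheduler picks an ordered pair $(i,j)$ of agents uniformly at random, independently of the past; only the initiator $i$ changes state. In $\mathrm{USD}_p$: if the initiator is $2$ and the responder $1$, the initiator becomes $\bot$; if the initiator is $1$ and the responder $2$, the initiator becomes $\bot$ with probability $1-p$ and otherwise stays $1$; if the initiator is $\bot$, it adopts the responder's state; otherwise nothing changes. $x_1(t),x_2(t),u(t)$ are the numbers of agents in states $1,2,\bot$ after $t$ interactions. The weighted bias is $\Delta_w(t) := x_1(t) - (1-p)x_2(t)$. ''With high probability'' means with probability at least $1-n^{-c}$ for a constant $c>0$. *)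

(* Defs.v *)
From Stdlib Require Import Reals Lra Lia List Arith.
Open Scope R_scope.

Inductive opinion := One | Two | Und.

Definition opinion_eqb (a b : opinion) : bool :=
  match a, b with
  | One, One | Two, Two | Und, Und => true
  | _, _ => false
  end.

(** A configuration of n agents: agent k (for k < n) has state sigma k. *)
Definition config := nat -> opinion.

Definition count (n : nat) (s : config) (o : opinion) : nat :=
  length (filter (fun k => opinion_eqb (s k) o) (seq 0 n)).

Definition x1 n s := INR (count n s One).
Definition x2 n s := INR (count n s Two).
Definition uu n s := INR (count n s Und).

Definition Delta_w (n : nat) (p : R) (s : config) : R := x1 n s - (1 - p) * x2 n s.

Definition update (s : config) (i : nat) (o : opinion) : config :=
  fun k => if Nat.eqb k i then o else s k.

(** Expected value of h after the interaction with initiator i, responder j. *)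
Definition interact_value (p : R) (h : config -> R) (s : config) (i j : nat) : R :=
  match s i, s j with
  | Two, One => h (update s i Und)
  | One, Two => p * h s + (1 - p) * h (update s i Und)
  | Und, o => h (update s i o)
  | _, _ => h s
  end.

Definition sumR (l : list nat) (f : nat -> R) : R :=
  fold_right Rplus 0 (map f l).

Definition step_expect (n : nat) (p : R) (h : config -> R) (s : config) : R :=
  / (INR n * INR (n - 1)) *
  sumR (seq 0 n) (fun i =>
    sumR (filter (fun j => negb (Nat.eqb j i)) (seq 0 n))
         (fun j => interact_value p h s i j)).

(** hit_prob n p thr t s = Pr[ T <= t ] where T = inf {t >= 0 : |Delta_w(t)| >= thr}
    for USD_p started from configuration s (probability of the Markov chain
    hitting the target set within t interactions, defined by first-step analysis). *)
Fixpoint hit_prob (n : nat) (p thr : R) (t : nat) (s : config) : R :=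
  if Rle_dec thr (Rabs (Delta_w n p s)) then 1
  else match t with
       | O => 0
       | S t' => step_expect n p (hit_prob n p thr t') s
       end.

(* Main.v *)
Require Import Defs.
From Stdlib Require Import Reals Lra Lia List Arith ZArith.
Open Scope R_scope.

Definition indb (b : bool) : nat := if b then 1%nat else 0%nat.

Lemma count_S n s o : count (S n) s o = (count n s o + indb (opinion_eqb (s n) o))%nat.
Proof.
  unfold count. rewrite seq_S, filter_app, length_app. simpl.
  unfold indb. destruct (opinion_eqb (s n) o); simpl; lia.
Qed.

Lemma count_0 s o : count 0 s o = 0%nat.
Proof. reflexivity. Qed.

Lemma count_total n s : (count n s One + count n s Two + count n s Und)%nat = n.
Proof.
  induction n; [reflexivity|].
  rewrite !count_S. destruct (s n); simpl; unfold indb; simpl; lia.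
Qed.

Lemma count_ext n s s' o : (forall k, (k < n)%nat -> s k = s' k) -> count n s o = count n s' o.
Proof.
  induction n; intros H; [reflexivity|].
  rewrite !count_S. rewrite IHn by (intros; apply H; lia). rewrite H by lia. reflexivity.
Qed.

Lemma count_update n s i o o' : (i < n)%nat ->
  (count n (update s i o) o' + indb (opinion_eqb (s i) o'))%nat =
  (count n s o' + indb (opinion_eqb o o'))%nat.
Proof.
  induction n; intros Hi; [lia|].
  rewrite !count_S.
  destruct (Nat.eq_dec i n) as [->|Hne].
  - rewrite (count_ext n (update s n o) s) by (intros k Hk; unfold update;
      destruct (Nat.eqb_spec k n); [lia|reflexivity]).
    unfold update at 1. rewrite Nat.eqb_refl. lia.
  - assert (update s i o n = s n) as E by (unfold update; destruct (Nat.eqb_spec n i); [lia|reflexivity]).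
    rewrite E. specialize (IHn ltac:(lia)). lia.
Qed.

Lemma sumR_app l1 l2 f : sumR (l1 ++ l2) f = sumR l1 f + sumR l2 f.
Proof. unfold sumR. induction l1; simpl; [ring|]. rewrite IHl1. ring. Qed.

Lemma sumR_ext_in l f g : (forall x, In x l -> f x = g x) -> sumR l f = sumR l g.
Proof.
  induction l; intros H; [reflexivity|]. unfold sumR in *; simpl.
  rewrite H by (left; reflexivity). rewrite IHl by (intros; apply H; right; auto). reflexivity.
Qed.

Lemma sumR_le_in l f g : (forall x, In x l -> f x <= g x) -> sumR l f <= sumR l g.
Proof.
  induction l; intros H; [unfold sumR; simpl; lra|]. unfold sumR in *; simpl.
  apply Rplus_le_compat. apply H; left; auto. apply IHl; intros; apply H; right; auto.
Qed.

Lemma sumR_lin l f a b : sumR l (fun x => a * f x + b) = a * sumR l f + b * INR (length l).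
Proof.
  induction l; unfold sumR in *; [simpl; ring|]. change (length (a0 :: l)) with (S (length l)). rewrite S_INR. simpl. rewrite IHl. ring.
Qed.

Lemma sum_by_type n s (g : opinion -> R) :
  sumR (seq 0 n) (fun k => g (s k)) =
  INR (count n s One) * g One + INR (count n s Two) * g Two + INR (count n s Und) * g Und.
Proof.
  induction n; [unfold sumR; simpl; ring|].
  rewrite seq_S, sumR_app, IHn, !count_S, !plus_INR. unfold sumR; simpl.
  destruct (s n); simpl; unfold indb; simpl; ring.
Qed.

Lemma sumR_filter n i g :
  sumR (filter (fun j => negb (Nat.eqb j i)) (seq 0 n)) g =
  sumR (seq 0 n) g - (if Nat.ltb i n then g i else 0).
Proof.
  induction n; [unfold sumR; simpl; ring|].
  rewrite seq_S, filter_app, !sumR_app, IHn. simpl.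
  destruct (Nat.eqb_spec n i) as [->|Hne]; simpl.
  - unfold sumR; simpl. destruct (Nat.ltb_spec i i); [lia|]. destruct (Nat.ltb_spec i (S i)); [|lia]. ring.
  - unfold sumR; simpl. destruct (Nat.ltb_spec i n); destruct (Nat.ltb_spec i (S n)); try lia; ring.
Qed.

Lemma length_filter_neq n i : (i < n)%nat ->
  INR (length (filter (fun j => negb (Nat.eqb j i)) (seq 0 n))) = INR n - 1.
Proof.
  intros Hi.
  assert (forall l, INR (length l) = sumR l (fun _ => 1)) as L.
  { induction l; unfold sumR in *; [reflexivity|]. change (length (a :: l)) with (S (length l)). rewrite S_INR, IHl. simpl. ring. }
  rewrite L, sumR_filter, <- L, length_seq. destruct (Nat.ltb_spec i n); [ring|lia].
Qed.


Lemma iv_ext p h1 h2 s i j : (forall s', h1 s' = h2 s') ->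
  interact_value p h1 s i j = interact_value p h2 s i j.
Proof. intros H. unfold interact_value. destruct (s i), (s j); rewrite ?H; reflexivity. Qed.

Lemma step_ext n p h1 h2 s : (forall s', h1 s' = h2 s') ->
  step_expect n p h1 s = step_expect n p h2 s.
Proof.
  intros H. unfold step_expect. f_equal. apply sumR_ext_in; intros i _.
  apply sumR_ext_in; intros j _. apply iv_ext; auto.
Qed.

Lemma iv_lin p h s i j a b :
  interact_value p (fun s => a * h s + b) s i j = a * interact_value p h s i j + b.
Proof. unfold interact_value. destruct (s i), (s j); ring. Qed.

Lemma step_lin n p h s a b : (2 <= n)%nat ->
  step_expect n p (fun s => a * h s + b) s = a * step_expect n p h s + b.
Proof.
  intros Hn. unfold step_expect.
  assert (HN : 0 < INR n * INR (n - 1)).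
  { apply Rmult_lt_0_compat; apply lt_0_INR; lia. }
  rewrite (sumR_ext_in _ _ (fun i => a * sumR (filter (fun j => negb (j =? i)) (seq 0 n))
         (fun j => interact_value p h s i j) + b * (INR n - 1))).
  2:{ intros i Hi. apply in_seq in Hi.
      rewrite (sumR_ext_in _ _ (fun j => a * interact_value p h s i j + b)) by (intros; apply iv_lin).
      rewrite sumR_lin. rewrite length_filter_neq by lia. reflexivity. }
  rewrite sumR_lin, length_seq. rewrite minus_INR by lia. simpl (INR 1).
  rewrite minus_INR in HN by lia. simpl (INR 1) in HN. field. assert (2 <= INR n) by (replace 2 with (INR 2) by (simpl; ring); apply le_INR; lia). split; lra.
Qed.

Lemma step_mono n p h1 h2 s : (2 <= n)%nat ->
  (forall i j, (i < n)%nat -> (j < n)%nat -> interact_value p h1 s i j <= interact_value p h2 s i j) ->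
  step_expect n p h1 s <= step_expect n p h2 s.
Proof.
  intros Hn H. unfold step_expect.
  assert (HN : 0 < INR n * INR (n - 1)).
  { apply Rmult_lt_0_compat; apply lt_0_INR; lia. }
  apply Rmult_le_compat_l. left; apply Rinv_0_lt_compat; auto.
  apply sumR_le_in; intros i Hi. apply sumR_le_in; intros j Hj.
  apply filter_In in Hj. destruct Hj as [Hj _]. apply in_seq in Hi, Hj. apply H; lia.
Qed.

Lemma step_const n p s c : (2 <= n)%nat -> step_expect n p (fun _ => c) s = c.
Proof.
  intros Hn. rewrite (step_ext n p _ (fun s => 0 * (fun _ => 0) s + c)) by (intros; simpl; ring).
  rewrite step_lin by auto. ring.
Qed.

Lemma iv_mono_all p h1 h2 s i j : 0 <= p <= 1 -> (forall s', h1 s' <= h2 s') ->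
  interact_value p h1 s i j <= interact_value p h2 s i j.
Proof.
  intros Hp H. unfold interact_value. destruct (s i), (s j); auto.
  apply Rplus_le_compat; apply Rmult_le_compat_l; auto; lra.
Qed.

Lemma step_mono_all n p h1 h2 s : (2 <= n)%nat -> 0 <= p <= 1 -> (forall s', h1 s' <= h2 s') ->
  step_expect n p h1 s <= step_expect n p h2 s.
Proof. intros. apply step_mono; auto. intros; apply iv_mono_all; auto. Qed.

Definition miss n p thr t s := 1 - hit_prob n p thr t s.

Lemma miss_target n p thr t s : thr <= Rabs (Delta_w n p s) -> miss n p thr t s = 0.
Proof. intros H. unfold miss. destruct t; simpl; destruct (Rle_dec thr _); try contradiction; ring. Qed.

Lemma miss_0 n p thr s : ~ thr <= Rabs (Delta_w n p s) -> miss n p thr 0 s = 1.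
Proof. intros H. unfold miss. simpl; destruct (Rle_dec thr _); try contradiction; ring. Qed.

Lemma miss_S n p thr t s : (2 <= n)%nat -> ~ thr <= Rabs (Delta_w n p s) ->
  miss n p thr (S t) s = step_expect n p (miss n p thr t) s.
Proof.
  intros Hn H. unfold miss at 1. simpl; destruct (Rle_dec thr _); try contradiction.
  rewrite (step_ext n p (miss n p thr t) (fun s => -1 * hit_prob n p thr t s + 1)) by (intros; unfold miss; ring).
  rewrite step_lin by auto. ring.
Qed.

Lemma miss_bounds n p thr t s : (2 <= n)%nat -> 0 <= p <= 1 -> 0 <= miss n p thr t s <= 1.
Proof.
  intros Hn Hp. revert s. induction t; intros s.
  - destruct (Rle_dec thr (Rabs (Delta_w n p s))).
    + rewrite miss_target; auto; lra.
    + rewrite miss_0; auto; lra.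
  - destruct (Rle_dec thr (Rabs (Delta_w n p s))).
    + rewrite miss_target; auto; lra.
    + rewrite miss_S by auto. split.
      * rewrite <- (step_const n p s 0) by auto. apply step_mono_all; auto. intros; apply IHt.
      * rewrite <- (step_const n p s 1) by auto. apply step_mono_all; auto. intros; apply IHt.
Qed.


Definition Good n p thr s :=
  (1 <= count n s One + count n s Two)%nat /\ Rabs (Delta_w n p s) < thr + 1.

Lemma count_pos n s j o : (j < n)%nat -> s j = o -> (1 <= count n s o)%nat.
Proof.
  induction n; intros Hj Ho; [lia|]. rewrite count_S.
  destruct (Nat.eq_dec j n) as [->|]. rewrite Ho. destruct o; simpl; unfold indb; lia.
  specialize (IHn ltac:(lia) Ho). lia.
Qed.

Lemma count_update_R n s i o o' : (i < n)%nat ->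
  INR (count n (update s i o) o') =
  INR (count n s o') - INR (indb (opinion_eqb (s i) o')) + INR (indb (opinion_eqb o o')).
Proof.
  intros Hi. pose proof (count_update n s i o o' Hi) as E.
  apply (f_equal INR) in E. rewrite !plus_INR in E. lra.
Qed.

Lemma Delta_update n p s i o : (i < n)%nat ->
  Delta_w n p (update s i o) = Delta_w n p s
    + (INR (indb (opinion_eqb o One)) - INR (indb (opinion_eqb (s i) One)))
    - (1 - p) * (INR (indb (opinion_eqb o Two)) - INR (indb (opinion_eqb (s i) Two))).
Proof.
  intros Hi. unfold Delta_w, x1, x2. rewrite !count_update_R by auto. ring.
Qed.

Lemma good_update n p thr s i o : (i < n)%nat -> 0 <= p <= 1 ->
  Good n p thr s -> ~ thr <= Rabs (Delta_w n p s) ->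
  (match s i, o with
   | Und, _ => True
   | One, Und => (1 <= count n s Two)%nat
   | Two, Und => (1 <= count n s One)%nat
   | _, _ => False end) ->
  Good n p thr (update s i o).
Proof.
  intros Hi Hp [Hw HD] Hnt Hc.
  pose proof (count_update n s i o One Hi) as E1.
  pose proof (count_update n s i o Two Hi) as E2.
  pose proof (Delta_update n p s i o Hi) as ED.
  split.
  - destruct (s i), o; simpl in *; unfold indb in *; simpl in *; try contradiction; lia.
  - rewrite ED. apply Rnot_le_lt in Hnt.
    destruct (s i), o; simpl in *; unfold indb in *; simpl in *; try contradiction;
    unfold Rabs in *; repeat destruct Rcase_abs; lra.
Qed.

Lemma iv_mono_good n p thr h1 h2 s i j : (i < n)%nat -> (j < n)%nat -> 0 <= p <= 1 ->
  Good n p thr s -> ~ thr <= Rabs (Delta_w n p s) ->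
  (forall s', Good n p thr s' -> h1 s' <= h2 s') ->
  interact_value p h1 s i j <= interact_value p h2 s i j.
Proof.
  intros Hi Hj Hp Hg Hnt H. unfold interact_value.
  destruct (s i) eqn:Ei, (s j) eqn:Ej; try (apply H; auto).
  - apply Rplus_le_compat; apply Rmult_le_compat_l; try lra; apply H; auto.
    apply good_update; auto. rewrite Ei. eapply count_pos; eauto.
  - apply good_update; auto. rewrite Ei. eapply count_pos; eauto.
  - apply good_update; auto. rewrite Ei. auto.
  - apply good_update; auto. rewrite Ei. auto.
  - apply good_update; auto. rewrite Ei. auto.
Qed.

Lemma step_mono_good n p thr h1 h2 s : (2 <= n)%nat -> 0 <= p <= 1 ->
  Good n p thr s -> ~ thr <= Rabs (Delta_w n p s) ->
  (forall s', Good n p thr s' -> h1 s' <= h2 s') ->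
  step_expect n p h1 s <= step_expect n p h2 s.
Proof. intros. apply step_mono; auto. intros; eapply iv_mono_good; eauto. Qed.

Lemma tmiss_le_V n p thr (V : config -> R) : (2 <= n)%nat -> 0 <= p <= 1 ->
  (forall s, Good n p thr s -> 0 <= V s) ->
  (forall s, Good n p thr s -> ~ thr <= Rabs (Delta_w n p s) -> step_expect n p V s <= V s - 1) ->
  forall t s, Good n p thr s -> INR t * miss n p thr t s <= V s.
Proof.
  intros Hn Hp V_nonneg V_drift.

  induction t; intros s Hg.
  - simpl. rewrite Rmult_0_l. auto.
  - destruct (Rle_dec thr (Rabs (Delta_w n p s))).
    + rewrite miss_target by auto. rewrite Rmult_0_r. auto.
    + rewrite miss_S by auto. rewrite S_INR.
      assert (step_expect n p (miss n p thr t) s <= 1).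
      { rewrite <- (step_const n p s 1) by auto. apply step_mono_all; auto.
        intros; apply miss_bounds; auto. }
      assert (INR t * step_expect n p (miss n p thr t) s <= step_expect n p V s).
      { pose proof (step_lin n p (miss n p thr t) s (INR t) 0 Hn) as E.
        assert (step_expect n p (fun s => INR t * miss n p thr t s + 0) s <= step_expect n p V s).
        { apply (step_mono_good n p thr); auto. intros s' Hs'. rewrite Rplus_0_r. apply IHt; auto. }
        lra. }
      pose proof (V_drift s Hg n0). lra.
Qed.

Lemma miss_mono n p thr d : (2 <= n)%nat -> 0 <= p <= 1 ->
  forall t s, Good n p thr s -> miss n p thr (t + d) s <= miss n p thr t s.
Proof.
  intros Hn Hp. induction t; intros s Hg.
  - destruct (Rle_dec thr (Rabs (Delta_w n p s))).
    + rewrite !miss_target by auto. lra.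
    + rewrite (miss_0 n p thr s n0). apply miss_bounds; auto.
  - destruct (Rle_dec thr (Rabs (Delta_w n p s))).
    + rewrite !miss_target by auto. lra.
    + simpl. rewrite !miss_S by auto. apply (step_mono_good n p thr); auto.
Qed.

Lemma miss_block n p thr L : (2 <= n)%nat -> 0 <= p <= 1 ->
  (forall s, Good n p thr s -> miss n p thr L s <= / 2) ->
  forall t s, Good n p thr s -> miss n p thr (t + L) s <= / 2 * miss n p thr t s.
Proof.
  intros Hn Hp HL. induction t; intros s Hg.
  - destruct (Rle_dec thr (Rabs (Delta_w n p s))).
    + rewrite !miss_target by auto. lra.
    + rewrite (miss_0 n p thr s n0). simpl. rewrite Rmult_1_r. auto.
  - destruct (Rle_dec thr (Rabs (Delta_w n p s))).
    + rewrite !miss_target by auto. lra.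
    + simpl. rewrite !miss_S by auto.
      pose proof (step_lin n p (miss n p thr t) s (/ 2) 0 Hn) as E.
      assert (step_expect n p (miss n p thr (t + L)) s <= step_expect n p (fun s => / 2 * miss n p thr t s + 0) s).
      { apply (step_mono_good n p thr); auto. intros; rewrite Rplus_0_r; auto. }
      lra.
Qed.

Lemma miss_blocks n p thr L : (2 <= n)%nat -> 0 <= p <= 1 ->
  (forall s, Good n p thr s -> miss n p thr L s <= / 2) ->
  forall k s, Good n p thr s -> miss n p thr (k * L) s <= (/ 2) ^ k.
Proof.
  intros Hn Hp HL. induction k; intros s Hg.
  - simpl. apply miss_bounds; auto.
  - rewrite Nat.mul_succ_l. eapply Rle_trans. apply miss_block; auto.
    simpl. apply Rmult_le_compat_l; [lra|]. auto.
Qed.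


Lemma step_counts n p (F : nat -> nat -> R) s : (2 <= n)%nat ->
  INR n * INR (n - 1) * step_expect n p (fun s => F (count n s One) (count n s Two)) s =
  INR n * INR (n - 1) * F (count n s One) (count n s Two)
  + INR (count n s One) * INR (count n s Two) *
      ((p * F (count n s One) (count n s Two) + (1 - p) * F (count n s One - 1)%nat (count n s Two))
        - F (count n s One) (count n s Two))
  + INR (count n s One) * INR (count n s Two) *
      (F (count n s One) (count n s Two - 1)%nat - F (count n s One) (count n s Two))
  + INR (count n s Und) * INR (count n s One) *
      (F (S (count n s One)) (count n s Two) - F (count n s One) (count n s Two))
  + INR (count n s Und) * INR (count n s Two) *
      (F (count n s One) (S (count n s Two)) - F (count n s One) (count n s Two)).
Proof.
  intros Hn.
  set (a := count n s One). set (b := count n s Two). set (c := count n s Und).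
  set (f := fun o o' => match o, o' with
                        | Two, One => F a (b - 1)%nat
                        | One, Two => p * F a b + (1 - p) * F (a - 1)%nat b
                        | Und, One => F (S a) b
                        | Und, Two => F a (S b)
                        | _, _ => F a b end).
  assert (Hiv : forall i j, (i < n)%nat ->
     interact_value p (fun s => F (count n s One) (count n s Two)) s i j = f (s i) (s j)).
  { intros i j Hi.
    pose proof (count_update n s i One One Hi) as E11.
    pose proof (count_update n s i One Two Hi) as E12.
    pose proof (count_update n s i Two One Hi) as E21.
    pose proof (count_update n s i Two Two Hi) as E22.
    pose proof (count_update n s i Und One Hi) as E31.
    pose proof (count_update n s i Und Two Hi) as E32.
    fold a b in E11, E12, E21, E22, E31, E32.
    unfold interact_value, f.
    destruct (s i) eqn:Ei, (s j) eqn:Ej; simpl in *; unfold indb in *; simpl in *;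
    try reflexivity;
    repeat match goal with
    | |- context [count n (update s i ?o) ?o'] =>
        let H := fresh in assert (H : count n (update s i o) o' = count n (update s i o) o') by reflexivity;
        clear H
    end.
    all: try (rewrite (Nat.add_0_r) in *).
    all: idtac.
    - replace (count n (update s i Und) One) with (a - 1)%nat by lia.
      replace (count n (update s i Und) Two) with b by lia. reflexivity.
    - replace (count n (update s i Und) One) with a by lia.
      replace (count n (update s i Und) Two) with (b - 1)%nat by lia. reflexivity.
    - replace (count n (update s i One) One) with (S a) by lia.
      replace (count n (update s i One) Two) with b by lia. reflexivity.
    - replace (count n (update s i Two) One) with a by lia.
      replace (count n (update s i Two) Two) with (S b) by lia. reflexivity.
    - replace (count n (update s i Und) One) with a by lia.
      replace (count n (update s i Und) Two) with b by lia. reflexivity. }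
  unfold step_expect.
  set (G := fun o => INR a * f o One + INR b * f o Two + INR c * f o Und - f o o).
  rewrite (sumR_ext_in _ _ (fun i => G (s i))).
  2:{ intros i Hi. apply in_seq in Hi.
      rewrite (sumR_ext_in _ _ (fun j => f (s i) (s j))) by (intros; apply Hiv; lia).
      rewrite sumR_filter. rewrite sum_by_type. destruct (Nat.ltb_spec i n); [|lia]. reflexivity. }
  rewrite (sum_by_type n s G). fold a b c. unfold G.
  pose proof (count_total n s) as Tot. fold a b c in Tot.
  assert (HN : INR a + INR b + INR c = INR n) by (rewrite <- Tot, !plus_INR; ring).
  assert (2 <= INR n) by (replace 2 with (INR 2) by (simpl; ring); apply le_INR; lia).
  rewrite minus_INR by lia. simpl (INR 1).
  unfold f. rewrite <- Rmult_assoc, Rinv_r by (apply Rgt_not_eq; nra).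
  rewrite <- HN. ring.
Qed.


Fixpoint Hh (m : nat) : R := match m with O => 0 | S m' => Hh m' + / INR (S m') end.

Lemma Hh_S m : Hh (S m) = Hh m + / INR (S m).
Proof. reflexivity. Qed.

Lemma Hh_nonneg m : 0 <= Hh m.
Proof. induction m; [simpl; lra|]. rewrite Hh_S. pose proof (RinvN_pos m). rewrite S_INR. lra. Qed.

Lemma Hh_mono m d : Hh m <= Hh (m + d).
Proof.
  induction d. rewrite Nat.add_0_r; lra.
  rewrite Nat.add_succ_r, Hh_S. pose proof (RinvN_pos (m + d)). rewrite S_INR. lra.
Qed.

Lemma exp_le_mono x y : x <= y -> exp x <= exp y.
Proof. intros [H|H]. left; apply exp_increasing; auto. subst; lra. Qed.

Lemma ln_le_mono x y : 0 < x -> x <= y -> ln x <= ln y.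
Proof. intros Hx [H|H]. left; apply ln_increasing; auto. subst; lra. Qed.

Lemma ln_le_sub1 x : 0 < x -> ln x <= x - 1.
Proof. intros Hx. pose proof (exp_ineq1_le (ln x)). rewrite exp_ln in H by auto. lra. Qed.

Lemma Hh_ln m : (1 <= m)%nat -> Hh m <= 1 + ln (INR m).
Proof.
  induction m; intros Hm; [lia|].
  destruct m. simpl. rewrite Rplus_0_l, Rinv_1, ln_1. lra.
  specialize (IHm ltac:(lia)). rewrite Hh_S.
  set (k := INR (S m)) in *.
  assert (Hk : 1 <= k) by (unfold k; rewrite S_INR; pose proof (pos_INR m); lra).
  replace (INR (S (S m))) with (k + 1) by (unfold k; rewrite (S_INR (S m)); reflexivity).
  assert (/ (k + 1) <= ln (k + 1) - ln k).
  { pose proof (exp_ineq1_le (- / (k + 1))) as E.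
    assert (k / (k + 1) <= exp (- / (k + 1))) by (replace (k / (k+1)) with (1 + - / (k+1)) by (field; lra); lra).
    apply ln_le_mono in H. 2:{ apply Rdiv_lt_0_compat; lra. }
    rewrite ln_exp in H. unfold Rdiv in H. rewrite ln_mult in H by (try apply Rinv_0_lt_compat; lra).
    rewrite ln_Rinv in H by lra. lra. }
  lra.
Qed.


Definition Ex p (F : nat -> nat -> R) a b c :=
  INR a * INR b * ((p * F a b + (1 - p) * F (a - 1)%nat b) - F a b)
  + INR a * INR b * (F a (b - 1)%nat - F a b)
  + INR c * INR a * (F (S a) b - F a b)
  + INR c * INR b * (F a (S b) - F a b).

Lemma Ex_lin p F1 F2 al be ga a b c :
  Ex p (fun a b => al * F1 a b + be * F2 a b + ga) a b c = al * Ex p F1 a b c + be * Ex p F2 a b c.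
Proof. unfold Ex. ring. Qed.

Lemma Ex_F1_eq p x y z x' y' :
  x * x' = x * (x - 1) -> y * y' = y * (y - 1) ->
  x * y * (p * - (x - (1 - p) * y) ^ 2 + (1 - p) * - (x' - (1 - p) * y) ^ 2 - - (x - (1 - p) * y) ^ 2)
     + x * y * (- (x - (1 - p) * y') ^ 2 - - (x - (1 - p) * y) ^ 2)
     + z * x * (- (x + 1 - (1 - p) * y) ^ 2 - - (x - (1 - p) * y) ^ 2)
     + z * y * (- (x - (1 - p) * (y + 1)) ^ 2 - - (x - (1 - p) * y) ^ 2)
     = - (x * y * ((1 - p) + (1 - p) ^ 2) + 2 * z * (x - (1 - p) * y) ^ 2 + z * x + z * y * (1 - p) ^ 2).
Proof.
  intros Ha Hb.
  assert (x * x' * x' = x * (x - 1) * (x - 1)).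
  { rewrite Ha. replace (x * (x - 1) * x') with ((x - 1) * (x * x')) by ring. rewrite Ha. ring. }
  assert (y * y' * y' = y * (y - 1) * (y - 1)).
  { rewrite Hb. replace (y * (y - 1) * y') with ((y - 1) * (y * y')) by ring. rewrite Hb. ring. }
  transitivity (x * y * (p * - (x - (1 - p) * y) ^ 2 - - (x - (1 - p) * y) ^ 2)
     - (1 - p) * (y * (x * x' * x') - 2 * (1-p) * y * y * (x * x') + (1-p)^2 * y*y*y * x)
     - (x*x*x*y - 2*x*x*(1-p)*(y*y') + x*(1-p)^2*(y*y'*y')) + x * y * (x - (1 - p) * y) ^ 2
     + z * x * (- (x + 1 - (1 - p) * y) ^ 2 - - (x - (1 - p) * y) ^ 2)
     + z * y * (- (x - (1 - p) * (y + 1)) ^ 2 - - (x - (1 - p) * y) ^ 2)).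
  ring. rewrite H, H0, Ha, Hb. ring.
Qed.

Lemma Ex_F1 p a b c : 0 <= p <= 1 ->
  Ex p (fun a b => - (INR a - (1 - p) * INR b) ^ 2) a b c <= - (INR a * INR b * (1 - p) ^ 2).
Proof.
  intros Hp. unfold Ex.
  assert (Ha : INR a * INR (a - 1) = INR a * (INR a - 1)).
  { destruct a. rewrite INR_0. ring. rewrite S_INR. replace (S a - 1)%nat with a by lia. ring. }
  assert (Hb : INR b * INR (b - 1) = INR b * (INR b - 1)).
  { destruct b. rewrite INR_0. ring. rewrite S_INR. replace (S b - 1)%nat with b by lia. ring. }
  rewrite !S_INR. rewrite Ex_F1_eq by auto.
  set (x := INR a) in *. set (y := INR b) in *. set (z := INR c).
  assert (x >= 0) by (apply Rle_ge, pos_INR). assert (y >= 0) by (apply Rle_ge, pos_INR).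
  assert (z >= 0) by (apply Rle_ge, pos_INR).
  assert (0 <= x * y * (1 - p)) by (apply Rmult_le_pos; [apply Rmult_le_pos|]; lra).
  assert (0 <= z * (x - (1 - p) * y) ^ 2) by (apply Rmult_le_pos; [lra| apply pow2_ge_0]).
  assert (0 <= z * x) by nra. assert (0 <= z * y * (1 - p) ^ 2) by (apply Rmult_le_pos; [nra| apply pow2_ge_0]).
  nra.
Qed.

Lemma Ex_F2 p a b c : 0 <= p <= 1 -> (1 <= a + b)%nat ->
  Ex p (fun a b => - Hh (pred (a + b))) a b c <= INR a + INR b - INR c.
Proof.
  intros Hp Hw. unfold Ex.
  assert (exists m, (a + b)%nat = S m) as [m Em] by (exists (pred (a + b)); lia).
  assert (Hab : INR a + INR b = INR (S m)) by (rewrite <- plus_INR, Em; reflexivity).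
  assert (HSm : 0 < INR (S m)) by (apply lt_0_INR; lia).
  replace (pred (S a + b)) with (S m) by lia.
  replace (pred (a + S b)) with (S m) by lia.
  rewrite Em. simpl pred. rewrite Hh_S.
  replace (pred (S m)) with m by lia.
  assert (Hc : INR c * INR a * (- (Hh m + / INR (S m)) - - Hh m) + INR c * INR b * (- (Hh m + / INR (S m)) - - Hh m) = - INR c).
  { replace (INR c * INR a * (- (Hh m + / INR (S m)) - - Hh m) + INR c * INR b * (- (Hh m + / INR (S m)) - - Hh m))
      with (- INR c * ((INR a + INR b) / INR (S m))) by (field; lra).
    rewrite Hab. field. lra. }
  assert (Hab2 : INR a * INR b * (p * - Hh m + (1 - p) * - Hh (pred (a - 1 + b)) - - Hh m) +
                 INR a * INR b * (- Hh (pred (a + (b - 1))) - - Hh m) <= INR a + INR b).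
  { destruct a as [|a']. rewrite INR_0. pose proof (pos_INR b). lra.
    destruct b as [|b']. rewrite INR_0. pose proof (pos_INR (S a')). lra.
    replace (pred (S a' - 1 + S b')) with (a' + b')%nat by lia.
    replace (pred (S a' + (S b' - 1))) with (a' + b')%nat by lia.
    replace m with (S (a' + b')) in * by lia.
    rewrite Hh_S.
    rewrite !S_INR, plus_INR in *. 
    set (u := INR a') in *. set (v := INR b') in *.
    assert (0 <= u) by apply pos_INR. assert (0 <= v) by apply pos_INR.
    replace ((u + 1) * (v + 1) * (p * - (Hh (a' + b') + / (u + v + 1)) + (1 - p) * - Hh (a' + b') - - (Hh (a' + b') + / (u + v + 1))) +
      (u + 1) * (v + 1) * (- Hh (a' + b') - - (Hh (a' + b') + / (u + v + 1))))
      with ((u + 1) * (v + 1) * (2 - p) / (u + v + 1)) by (field; lra).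
    apply Rmult_le_reg_r with (u + v + 1). lra.
    unfold Rdiv. rewrite Rmult_assoc, Rinv_l by lra. assert (0 <= (u+1)*(v+1)*p) by (apply Rmult_le_pos; nra). nra. }
  lra.
Qed.


Lemma ab_lower q N x y : 0 < q < 1 -> 0 <= x -> 0 <= y -> 0 <= N -> N / 3 <= x + y ->
  Rabs (x - q * y) <= q * N / 6 -> q * N * N / 144 <= x * y.
Proof.
  intros Hq Hx Hy HN Hw HD.
  assert (HD' : - (q * N / 6) <= x - q * y <= q * N / 6) by (unfold Rabs in HD; destruct Rcase_abs; lra).
  assert (Hy1 : (1 + q) * y >= N / 6) by nra.
  assert (Hy2 : y >= N / 12) by nra.
  assert (Hx1 : (1 + q) * x >= q * N / 6) by nra.
  assert (Hx2 : x >= q * N / 12) by nra.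
  assert (0 <= q * N / 12) by (apply Rmult_le_pos; [apply Rmult_le_pos|]; lra).
  nra.
Qed.

Lemma drift_real p N x y z E1 E2 : 0 < p < 1 -> 0 <= x -> 0 <= y -> 0 <= z -> N = x + y + z ->
  Rabs (x - (1 - p) * y) <= (1 - p) * N / 6 ->
  E1 <= - (x * y * (1 - p) ^ 2) -> E2 <= x + y - z ->
  576 / (1 - p) ^ 3 * E1 + 3 * N * E2 <= - (N * (N - 1)).
Proof.
  intros Hp Hx Hy Hz HN HD H1 H2.
  set (q := 1 - p) in *.
  assert (Hq : 0 < q < 1) by (unfold q; lra).
  assert (HA : 0 < 576 / q ^ 3) by (apply Rdiv_lt_0_compat; [lra| apply pow_lt; lra]).
  assert (HE2 : 3 * N * E2 <= 3 * N * (x + y - z)) by (apply Rmult_le_compat_l; lra).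
  assert (HE1 : 576 / q ^ 3 * E1 <= 576 / q ^ 3 * - (x * y * q ^ 2)) by (apply Rmult_le_compat_l; lra).
  assert (0 <= x * y) by nra.
  destruct (Rle_dec (x + y) (N / 3)).
  - assert (576 / q ^ 3 * - (x * y * q ^ 2) <= 0).
    { assert (0 <= 576 / q ^ 3 * (x * y * q ^ 2)) by (apply Rmult_le_pos; [lra| apply Rmult_le_pos; [lra| apply pow2_ge_0]]). lra. }
    nra.
  - pose proof (ab_lower q N x y Hq Hx Hy ltac:(lra) ltac:(lra) HD).
    assert (E : 576 / q ^ 3 * - (x * y * q ^ 2) = - (576 / q * (x * y))) by (field; lra).
    assert (576 / q * (x * y) >= 576 / q * (q * N * N / 144)) by (apply Rle_ge, Rmult_le_compat_l; [apply Rlt_le, Rdiv_lt_0_compat; lra | lra]).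
    replace (576 / q * (q * N * N / 144)) with (4 * N * N) in H3 by (field; lra).
    nra.
Qed.

Definition Vf n p thr A (a b : nat) : R :=
  A * ((thr + 1) ^ 2 - (INR a - (1 - p) * INR b) ^ 2) + 3 * INR n * (Hh n - Hh (pred (a + b))).

Definition V n p thr A s := Vf n p thr A (count n s One) (count n s Two).

Lemma Delta_counts n p s : Delta_w n p s = INR (count n s One) - (1 - p) * INR (count n s Two).
Proof. reflexivity. Qed.

Lemma V_drift n p thr s : (2 <= n)%nat -> 0 < p < 1 ->
  Good n p thr s -> Rabs (Delta_w n p s) <= (1 - p) * INR n / 6 ->
  step_expect n p (V n p thr (576 / (1 - p) ^ 3)) s <= V n p thr (576 / (1 - p) ^ 3) s - 1.
Proof.
  intros Hn Hp [Hw HD] Hsmall.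
  set (A := 576 / (1 - p) ^ 3).
  pose proof (step_counts n p (Vf n p thr A) s Hn) as E.
  set (a := count n s One) in *. set (b := count n s Two) in *. set (c := count n s Und) in *.
  change (fun s => Vf n p thr A (count n s One) (count n s Two)) with (V n p thr A) in E.
  assert (E' : INR n * INR (n - 1) * step_expect n p (V n p thr A) s =
          INR n * INR (n - 1) * Vf n p thr A a b + Ex p (Vf n p thr A) a b c) by (rewrite E; unfold Ex; ring).
  clear E. rename E' into E.
  assert (Ex p (Vf n p thr A) a b c = A * Ex p (fun a b => - (INR a - (1 - p) * INR b) ^ 2) a b c
            + 3 * INR n * Ex p (fun a b => - Hh (pred (a + b))) a b c).
  { rewrite <- (Ex_lin p _ _ A (3 * INR n) (A * (thr + 1) ^ 2 + 3 * INR n * Hh n)). unfold Ex, Vf. ring. }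
  pose proof (Ex_F1 p a b c ltac:(lra)).
  pose proof (Ex_F2 p a b c ltac:(lra) Hw).
  pose proof (count_total n s) as Tot. fold a b c in Tot.
  assert (HN : INR n = INR a + INR b + INR c) by (rewrite <- Tot, !plus_INR; ring).
  rewrite Delta_counts in Hsmall. fold a b in Hsmall.
  pose proof (drift_real p (INR n) (INR a) (INR b) (INR c) _ _ Hp (pos_INR _) (pos_INR _) (pos_INR _) HN Hsmall H0 H1).
  fold A in H2.
  assert (2 <= INR n) by (replace 2 with (INR 2) by (simpl; ring); apply le_INR; lia).
  rewrite minus_INR in E by lia. simpl (INR 1) in E.
  unfold V at 2. fold a b.
  apply Rmult_le_reg_l with (INR n * (INR n - 1)). nra.
  rewrite E, H. nra.
Qed.


Lemma V_nonneg n p thr A s : 0 <= thr -> 0 <= A -> Good n p thr s -> 0 <= V n p thr A s.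
Proof.
  intros Ht HA [Hw HD]. unfold V, Vf. rewrite Delta_counts in HD.
  set (D := INR (count n s One) - (1 - p) * INR (count n s Two)) in *.
  assert (0 <= (thr + 1) ^ 2 - D ^ 2) by (unfold Rabs in HD; destruct Rcase_abs; nra).
  pose proof (count_total n s).
  assert (Hh (pred (count n s One + count n s Two)) <= Hh n).
  { set (w := pred (count n s One + count n s Two)).
    pose proof (Hh_mono w (n - w)). replace (w + (n - w))%nat with n in H1 by (unfold w; lia). auto. }
  pose proof (pos_INR n).
  apply Rplus_le_le_0_compat; apply Rmult_le_pos; lra.
Qed.

Lemma V_upper n p thr A s : (1 <= n)%nat -> 0 <= A ->
  V n p thr A s <= A * (thr + 1) ^ 2 + 3 * INR n * (1 + ln (INR n)).
Proof.
  intros Hn HA. unfold V, Vf.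
  pose proof (Hh_ln n Hn). pose proof (Hh_nonneg (pred (count n s One + count n s Two))).
  pose proof (pos_INR n).
  assert (A * ((thr + 1) ^ 2 - (INR (count n s One) - (1 - p) * INR (count n s Two)) ^ 2) <= A * (thr + 1) ^ 2).
  { apply Rmult_le_compat_l; auto. pose proof (pow2_ge_0 (INR (count n s One) - (1 - p) * INR (count n s Two))). lra. }
  assert (3 * INR n * (Hh n - Hh (pred (count n s One + count n s Two))) <= 3 * INR n * (1 + ln (INR n))).
  { apply Rmult_le_compat_l; lra. }
  lra.
Qed.

Lemma up_nat x : 0 <= x -> x <= INR (Z.to_nat (up x)) <= x + 1.
Proof.
  intros Hx. destruct (archimed x) as [H1 H2].
  assert (0 < up x)%Z by (apply lt_IZR; lra).
  rewrite INR_IZR_INZ, Z2Nat.id by lia. lra.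
Qed.

Lemma pow_half_Rpower (N : R) (k : nat) : 1 <= N -> ln N <= INR k -> (/ 2) ^ k <= Rpower N (- ln 2).
Proof.
  intros HN Hk. unfold Rpower.
  rewrite <- (exp_ln ((/ 2) ^ k)) by (apply pow_lt; lra).
  rewrite ln_pow by lra. rewrite ln_Rinv by lra.
  apply exp_le_mono. pose proof ln_lt_2. nra.
Qed.


Theorem lemma4 (eps p xi : R) :
  0 < eps <= 1 -> 0 < p < 1 -> 0 < xi ->
  exists (C c : R) (n0 : nat), 0 < C /\ 0 < c /\
    forall (n : nat) (s : config),
      (n0 <= n)%nat ->
      eps * INR n <= x1 n s ->
      x1 n s <= x2 n s ->
      uu n s <= INR n / 2 ->
      Rabs (Delta_w n p s) < xi * sqrt (INR n * ln (INR n)) ->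
      hit_prob n p (xi * sqrt (INR n * ln (INR n)))
               (Z.to_nat (up (C * INR n * (ln (INR n)) ^ 2))) s
        >= 1 - Rpower (INR n) (- c).
Proof.
  intros Heps Hp Hxi.
  set (q := 1 - p).
  assert (Hq : 0 < q < 1) by (unfold q; lra).
  set (A := 576 / q ^ 3).
  assert (HA : 0 < A) by (apply Rdiv_lt_0_compat; [lra| apply pow_lt; lra]).
  set (del := q / 6).
  assert (Hdel : 0 < del) by (unfold del; lra).
  set (K1 := 2 * A * xi ^ 2 + 2 * A + 6).
  assert (HK1 : 0 < K1) by (unfold K1; pose proof (pow2_ge_0 xi); nra).
  set (M := 2 * xi ^ 2 / del ^ 2).
  assert (HM : 0 < M) by (unfold M; apply Rdiv_lt_0_compat; [pose proof (pow_lt xi 2 Hxi); lra| apply pow_lt; lra]).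
  exists (2 * (2 * K1 + 1)), (ln 2), (Nat.max 3 (Z.to_nat (up (M ^ 2)))).
  split; [lra|]. split; [pose proof ln_lt_2; lra|].
  intros n s Hn0 Hx1 _ _ HD.
  set (N := INR n) in *.
  assert (Hn3 : (3 <= n)%nat) by lia.
  assert (HN3 : 3 <= N) by (unfold N; replace 3 with (INR 3) by (simpl; ring); apply le_INR; lia).
  assert (HNM : M ^ 2 <= N).
  { pose proof (up_nat (M ^ 2) ltac:(apply pow2_ge_0)) as [U _].
    unfold N. eapply Rle_trans; [apply U|]. apply le_INR. lia. }
  assert (Hln1 : 1 <= ln N).
  { rewrite <- (ln_exp 1). apply ln_le_mono. apply exp_pos. pose proof exp_le_3. lra. }
  set (thr := xi * sqrt (N * ln N)) in *.
  assert (HNl : 0 <= N * ln N) by nra.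
  assert (Hthr0 : 0 <= thr) by (unfold thr; apply Rmult_le_pos; [lra| apply sqrt_pos]).
  assert (Hthr2 : thr ^ 2 = xi ^ 2 * (N * ln N)).
  { unfold thr. replace ((xi * sqrt (N * ln N)) ^ 2) with (xi ^ 2 * (sqrt (N * ln N) * sqrt (N * ln N))) by ring.
    rewrite sqrt_sqrt by auto. ring. }
  assert (Hthr : thr <= del * N).
  { assert (HsN : M <= sqrt N).
    { rewrite <- (sqrt_pow2 M) by lra. apply sqrt_le_1_alt. auto. }
    assert (Hs : sqrt N * sqrt N = N) by (apply sqrt_sqrt; lra).
    assert (Hs0 : 0 < sqrt N) by (apply sqrt_lt_R0; lra).
    assert (HlnN : ln N <= 2 * sqrt N).
    { replace N with (sqrt N * sqrt N) at 1 by auto. rewrite ln_mult by auto.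
      pose proof (ln_le_sub1 (sqrt N) Hs0). lra. }
    assert (xi ^ 2 * ln N <= del ^ 2 * N).
    { assert (xi ^ 2 * ln N <= xi ^ 2 * (2 * sqrt N)) by (apply Rmult_le_compat_l; [apply pow2_ge_0|lra]).
      assert (2 * xi ^ 2 <= del ^ 2 * sqrt N).
      { unfold M in HsN. apply Rmult_le_compat_l with (r := del ^ 2) in HsN; [|apply pow2_ge_0].
        replace (del ^ 2 * (2 * xi ^ 2 / del ^ 2)) with (2 * xi ^ 2) in HsN by (field; lra). lra. }
      rewrite <- Hs at 2. nra. }
    assert (thr ^ 2 <= (del * N) ^ 2) by (rewrite Hthr2; nra).
    assert (0 <= del * N) by nra.
    nra. }
  set (Vmax := A * (thr + 1) ^ 2 + 3 * N * (1 + ln N)).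
  assert (HVmax : 0 < Vmax) by (unfold Vmax; pose proof (pow2_ge_0 (thr + 1)); nra).
  assert (HVK : Vmax <= K1 * (N * ln N)).
  { unfold Vmax, K1. assert ((thr + 1) ^ 2 <= 2 * thr ^ 2 + 2) by (pose proof (pow2_ge_0 (thr - 1)); nra).
    rewrite Hthr2 in H. assert (1 <= N * ln N) by nra.
    assert (A * (thr + 1) ^ 2 <= A * (2 * (xi ^ 2 * (N * ln N)) + 2)) by (apply Rmult_le_compat_l; lra).
    assert (N <= N * ln N) by nra.
    assert (2 * A <= 2 * A * (N * ln N)) by nra.
    nra. }
  set (L := Z.to_nat (up (2 * Vmax))).
  pose proof (up_nat (2 * Vmax) ltac:(lra)) as [HL1 HL2]. fold L in HL1, HL2.
  assert (Hn2 : (2 <= n)%nat) by lia.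
  assert (Hp01 : 0 <= p <= 1) by lra.
  assert (Hsm : forall s, ~ thr <= Rabs (Delta_w n p s) -> Rabs (Delta_w n p s) <= (1 - p) * INR n / 6).
  { intros s' Hnt. apply Rnot_le_lt in Hnt. replace ((1 - p) * INR n / 6) with (del * N) by (unfold del, q, N; field). lra. }
  assert (HLhalf : forall s, Good n p thr s -> miss n p thr L s <= / 2).
  { intros s' Hg.
    pose proof (tmiss_le_V n p thr (V n p thr A) Hn2 Hp01
       (fun s Hs => V_nonneg n p thr A s Hthr0 (Rlt_le _ _ HA) Hs)
       (fun s Hs Hnt => V_drift n p thr s Hn2 Hp ltac:(exact Hs) ltac:(apply Hsm; auto)) L s' Hg) as T1.
    pose proof (V_upper n p thr A s' ltac:(lia) (Rlt_le _ _ HA)). fold N in H. fold Vmax in H.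
    pose proof (miss_bounds n p thr L s' Hn2 Hp01).
    assert (INR L * miss n p thr L s' <= INR L * / 2).
    { replace (INR L * / 2) with (INR L / 2) by (unfold Rdiv; ring). lra. }
    apply Rmult_le_reg_l in H1; auto. lra. }
  set (k := Z.to_nat (up (ln N))).
  pose proof (up_nat (ln N) ltac:(lra)) as [Hk1 Hk2]. fold k in Hk1, Hk2.
  assert (Hg0 : Good n p thr s).
  { split; [|lra].
    destruct (count n s One) eqn:E1. unfold x1 in Hx1. rewrite E1 in Hx1. simpl in Hx1.
    assert (0 < eps * N) by (apply Rmult_lt_0_compat; lra). unfold N in *. lra. lia. }
  pose proof (miss_blocks n p thr L Hn2 Hp01 HLhalf k s Hg0) as HB.
  pose proof (pow_half_Rpower N k ltac:(lra) Hk1) as HR.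
  set (T := Z.to_nat (up (2 * (2 * K1 + 1) * N * ln N ^ 2))).
  assert (HkT : (k * L <= T)%nat).
  { apply INR_le. rewrite mult_INR.
    pose proof (up_nat (2 * (2 * K1 + 1) * N * ln N ^ 2) ltac:(nra)) as [HT _]. fold T in HT.
    eapply Rle_trans; [|apply HT].
    assert (INR k <= 2 * ln N) by lra.
    assert (INR L <= (2 * K1 + 1) * (N * ln N)) by nra.
    pose proof (pos_INR k). pose proof (pos_INR L).
    replace (2 * (2 * K1 + 1) * N * ln N ^ 2) with ((2 * ln N) * ((2 * K1 + 1) * (N * ln N))) by ring.
    apply Rmult_le_compat; auto. }
  pose proof (miss_mono n p thr (T - k * L) Hn2 Hp01 (k * L) s Hg0) as HM2.
  replace (k * L + (T - k * L))%nat with T in HM2 by lia.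
  unfold miss in HM2, HB. fold N. fold T. lra.
Qed.
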